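(* Let ${\rm H}>0$, ${\rm K}>0$ and set \[ R^{({\rm H},{\rm K})}(s,t)=2^{-{\rm K}}\Bigl(\bigl(|s|^{2{\rm H}}+|t|^{2{\rm H}}\bigr)^{{\rm K}}-|t-s|^{2{\rm H}{\rm K}}\Bigr). \] (a) If there exists a centered Gaussian process $(B(t))_{t\in\mathbb{R}}$ with covariance $R^{({\rm H},{\rm K})}(s,t)$, $s,t\in\mathbb{R}$, then $(2{\rm H}-1){\rm K}\le 1$, i.e. ${\rm K}\le \frac{1}{2{\rm H}-1}$ whenever ${\rm H}>\tfrac12$. (b) If there exists a centered Gaussian process $(B(t))_{t\ge 0}$ with covariance $R^{({\rm H},{\rm K})}(s,t)$, $s,t\ge 0$, then ${\rm K}\le \widehat{{\rm K}}({\rm H})$, where \[ \widehat{{\rm K}}({\rm H}):=\sup\Bigl\{{\rm K}'>0:\ \sup_{\tau>0}\Bigl(\bigl(\cosh({\rm H}\tau)\bigr)^{{\rm K}'}-2^{(2{\rm H}-1){\rm K}'}\bigl|\sinh(\tau/2)\bigr|^{2{\rm H}{\rm K}'}\Bigr)\le 1\Bigr\}. \] Moreover, $\widehat{{\rm K}}({\rm H})<{\rm H}^{-1}$ for every ${\rm H}>1$. *)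

(* Defs.v *)
From HB Require Import structures.
From mathcomp Require Import all_boot all_order all_algebra.
From mathcomp Require Import all_classical all_reals all_analysis.
Set Implicit Arguments. Unset Strict Implicit. Unset Printing Implicit Defensive.
Import Order.TTheory GRing.Theory Num.Theory.
Import numFieldNormedType.Exports.
Local Open Scope classical_set_scope.
Local Open Scope ring_scope.

Definition cosh {R : realType} (x : R) : R := (expR x + expR (- x)) / 2.
Definition sinh {R : realType} (x : R) : R := (expR x - expR (- x)) / 2.

Definition covHK {R : realType} (H K : R) (s t : R) : R :=
  2 `^ (- K) * ((`|s| `^ (2 * H) + `|t| `^ (2 * H)) `^ K
                 - `|t - s| `^ (2 * H * K)).

(* A real random variable Y is centered Gaussian: its law is N(0, s^2) for
   some s > 0, or the Dirac mass at 0 (degenerate Gaussian, s = 0). *)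
Definition centered_gaussian_rv {d} {T : measurableType d} {R : realType}
  (P : probability T R) (Y : T -> R) : Prop :=
  exists2 s : R, 0 <= s &
    forall A : set R, measurable A ->
      P (Y @^-1` A) = (if s == 0 then \d_(0 : R) A else normal_prob 0 s A).

Definition centered_gaussian_process {d} {T : measurableType d} {R : realType}
  (P : probability T R) (S : set R) (X : R -> T -> R) (C : R -> R -> R) : Prop :=
  [/\ (forall t, S t -> measurable_fun setT (X t)),
      (forall t, S t -> ('E_P[X t] = 0)%E),
      (forall s t, S s -> S t -> ('E_P[X s \* X t] = (C s t)%:E)%E) &
      (forall (n : nat) (ts : 'I_n -> R) (a : 'I_n -> R),
          (forall i, S (ts i)) ->
          centered_gaussian_rv P (fun w => \sum_(i < n) a i * X (ts i) w))].

Definition Kfun {R : realType} (H K' tau : R) : R :=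
  cosh (H * tau) `^ K' - 2 `^ ((2 * H - 1) * K') * `|sinh (tau / 2)| `^ (2 * H * K').

Definition Khat {R : realType} (H : R) : \bar R :=
  ereal_sup [set K'%:E | K' in
    [set K' : R | (0 < K')%R /\
      (ereal_sup [set (Kfun H K' tau)%:E | tau in [set tau : R | (0 < tau)%R]]
         <= 1%E)%E]].

(* Main.v *)
Require Import Defs.
From HB Require Import structures.
From mathcomp Require Import all_boot all_order all_algebra.
From mathcomp Require Import all_classical all_reals all_analysis.
Import Order.TTheory GRing.Theory Num.Theory.
Local Open Scope classical_set_scope.
Local Open Scope ring_scope.
From mathcomp Require Import lra ring measurable_realfun.

Lemma two_powRD (R : realType) (r s : R) : (2:R) `^ (r + s) = 2 `^ r * 2 `^ s.
Proof. by rewrite powRD //; apply/implyP => _; rewrite pnatr_eq0. Qed.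

Lemma two_powRNK (R : realType) (r : R) : (2:R) `^ (- r) * 2 `^ r = 1.
Proof. by rewrite -two_powRD addNr powRr0. Qed.

Lemma sinh_term (R : realType) (H K tau : R) : 0 <= tau ->
  2 `^ ((2 * H - 1) * K) * `|sinh (tau / 2)| `^ (2 * H * K) =
  2 `^ (- K) * expR (tau * H * K) * (1 - expR (- tau)) `^ (2 * H * K).
Proof.
move=> t0.
have e1 : 0 <= 1 - expR (- tau).
  by rewrite subr_ge0 -expR0 ler_expR oppr_le0.
have -> : sinh (tau / 2) = expR (tau / 2) * (1 - expR (- tau)) * 2^-1.
  rewrite /sinh mulrBr mulr1 -expRD.
  have -> : tau / 2 + - tau = - (tau / 2) by field.
  by [].
rewrite ger0_norm ?mulr_ge0 ?expR_ge0 ?invr_ge0 //.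
rewrite !powRM ?mulr_ge0 ?expR_ge0 ?invr_ge0 // -expRM.
have -> : tau / 2 * (2 * H * K) = tau * H * K by field.
have -> : (2 * H - 1) * K = - K + 2 * H * K by ring.
rewrite two_powRD.
have : 2 `^ (2 * H * K) * 2^-1 `^ (2 * H * K) = 1 :> R.
  by rewrite -powRM ?invr_ge0 // mulfV ?pnatr_eq0 // powR1.
move: (2 `^ (2 * H * K)) (2^-1 `^ (2 * H * K)) => u v uv.
rewrite -[RHS]mulr1 -uv; ring.
Qed.

Lemma Kfun_lb (R : realType) (H K tau : R) : 0 <= K -> 0 <= tau ->
  2 `^ (- K) * expR (tau * H * K) * (1 - (1 - expR (- tau)) `^ (2 * H * K))
  <= Kfun H K tau.
Proof.
move=> k0 t0; rewrite /Kfun sinh_term // mulrBr mulr1 lerD2r.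
have -> : 2 `^ (- K) * expR (tau * H * K) = (expR (H * tau) / 2) `^ K.
  rewrite powRM ?invr_ge0 ?expR_ge0 // -expRM mulrC; congr (_ * _).
    by congr expR; ring.
  have g : 0 < (2:R) `^ K by rewrite powR_gt0.
  apply: (@mulIf _ (2 `^ K)); first by rewrite gt_eqF.
  by rewrite -powRM ?invr_ge0 // mulVf ?pnatr_eq0 // powR1 -two_powRD addNr powRr0.
apply: (ge0_ler_powR k0); rewrite ?nnegrE ?divr_ge0 ?expR_ge0 ?addr_ge0 //.
by rewrite ler_pM2r // lerDl expR_ge0.
Qed.

Lemma ltr_powR_exp (R : realType) (b r s : R) : 1 < b -> r < s -> b `^ r < b `^ s.
Proof.
move=> b1 rs; rewrite /powR gt_eqF ?(lt_trans ltr01) // ltr_expR.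
by rewrite ltr_pM2r // ln_gt0.
Qed.

Lemma powR_lnE (R : realType) (x r : R) : 0 < x -> x `^ r = expR (r * ln x).
Proof. by move=> x0; rewrite /powR gt_eqF. Qed.

Lemma bernoulli_le1 (R : realType) (w a : R) : 0 <= w -> 0 < a < 1 ->
  w `^ a <= a * w + (1 - a).
Proof.
move=> w0 /andP[a0 a1].
have p0 : 0 < a^-1 by rewrite invr_gt0.
have q0 : 0 < (1 - a)^-1 by rewrite invr_gt0 subr_gt0.
have := @conjugate_powR _ (w `^ a) 1 a^-1 (1 - a)^-1 (powR_ge0 _ _) ler01 p0 q0.
rewrite !invrK mulr1 powR1 -powRrM mulfV ?gt_eqF // powRr1 //.
rewrite mul1r (mulrC w); apply.
by ring.
Qed.

Lemma powR_sq2 (R : realType) (z b : R) : 0 <= z -> z `^ (2 * b) = (z ^+ 2) `^ b.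
Proof. by move=> z0; rewrite powRrM (@powR_mulrn _ _ 2). Qed.

Lemma Kfun_big (R : realType) (H : R) : 1 < H ->
  exists a0 tau0 : R, [/\ 0 < a0, a0 < 1, 0 < tau0 &
    forall K, 0 < K -> a0 < H * K -> 1 < Kfun H K tau0].
Proof.
move=> H1; have H0 : 0 < H by apply: lt_trans H1.
pose y : R := 2 `^ H^-1.
have y1 : 1 < y.
  rewrite /y -[X in X < _](powRr0 2); apply: ltr_powR_exp; [by rewrite ltr1n | by rewrite invr_gt0].
have y2 : y < 2.
  have : y < 2 `^ 1 by apply: ltr_powR_exp; [by rewrite ltr1n | by rewrite invf_lt1].
  by rewrite powRr1.
pose x0 : R := (2 - y) / 2.
have x00 : 0 < x0 by rewrite /x0 divr_gt0 // subr_gt0.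
have x01 : x0 < 1 by rewrite /x0 ltr_pdivrMr //; lra.
pose tau0 : R := - ln x0.
have t0 : 0 < tau0 by rewrite /tau0 oppr_gt0 ln_lt0 // x00 x01.
have ex0 : expR (- tau0) = x0 by rewrite opprK lnK // posrE.
pose r : R := (2 - x0) / y.
have y0 : 0 < y by apply: lt_trans y1.
have r1 : 1 < r by rewrite /r ltr_pdivlMr // mul1r /x0; lra.
pose dl : R := 1 - r^-1.
have dl0 : 0 < dl by rewrite /dl subr_gt0 invf_lt1 // (lt_trans ltr01).
have dl1 : dl < 1 by rewrite /dl ltrBlDr ltrDl invr_gt0 (lt_trans ltr01).
pose eps : R := dl / (2 * (tau0 + 1)).
have e0 : 0 < eps by rewrite /eps divr_gt0 // mulr_gt0 // addr_gt0.
have e1 : eps * (tau0 + 1) = dl / 2.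
  by rewrite /eps; field; rewrite gt_eqF // addr_gt0.
have et : eps * tau0 <= dl / 2 by nra.
have eps1 : eps < 1 by nra.
exists (1 - eps), tau0; split => //; first by lra.
  by lra.
move=> K K0 aK.
pose a := H * K.
have y0' : 0 <= y := ltW y0.
have x0' : 0 <= x0 := ltW x00.
have yx0' : 0 <= y * x0 := mulr_ge0 y0' x0'.
have lb := @Kfun_lb R H K tau0 (ltW K0) (ltW t0).
rewrite ex0 in lb.
have P : (2:R) `^ (- K) = y `^ (- a).
  by rewrite /y -powRrM; congr (_ `^ _); rewrite /a; field; rewrite gt_eqF.
have Q : expR (tau0 * H * K) = x0 `^ (- a).
  by rewrite powR_lnE // /tau0 /a; congr expR; ring.
have x1 : 0 <= 1 - x0 by lra.
have Zw := @powR_sq2 R _ a x1.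
rewrite -(mulrA 2 H K) in lb.
rewrite P Q Zw in lb; apply: lt_le_trans lb.
pose w : R := (1 - x0) ^+ 2.
have w01 : 0 < w <= 1.
  by apply/andP; split; rewrite /w; nra.
have w1 : 1 - w = x0 * (2 - x0) by rewrite /w; ring.
have xx0 : 0 < x0 * (2 - x0) by nra.
case: (leP 1 a) => ha.
  have wa : w `^ a <= w by have := ge1r_powR w01 ha.
  have m : y `^ (- a) * x0 `^ (- a) = (y * x0) `^ (- a) by rewrite powRM.
  have yx : 0 < y * x0 <= 1.
    apply/andP; split; first by rewrite mulr_gt0.
    by rewrite /x0; nra.
  have m2 : (y * x0)^-1 <= (y * x0) `^ (- a).
    rewrite -powR_inv1 //.
    by apply: (ger_powR yx); rewrite lerN2.
  rewrite m.
  apply: (lt_le_trans r1).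
  have -> : r = (y * x0)^-1 * (1 - w).
    by rewrite w1 /r; field; rewrite !gt_eqF.
  apply: ler_pM => //.
  - by rewrite invr_ge0.
  - by rewrite w1; exact: ltW.
  - by rewrite lerD2l lerN2.
have hy : y^-1 <= y `^ (- a).
  rewrite -powR_inv1 //.
  by apply: (ler_powR (ltW y1)); rewrite lerN2; exact: ltW.
have hx : x0^-1 * (1 - eps * tau0) <= x0 `^ (- a).
  have -> : - a = - 1 + (1 - a) by ring.
  rewrite powRD; last by apply/implyP => _; rewrite gt_eqF.
  rewrite powR_inv1 //.
  rewrite ler_pM2l ?invr_gt0 //.
  have xe : x0 `^ eps <= x0 `^ (1 - a).
    apply: (ger_powR (a:=x0)); first by rewrite x00 (ltW x01).
    rewrite /a; lra.
  apply: le_trans xe.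
  rewrite powR_lnE //.
  have -> : eps * ln x0 = - (eps * tau0) by rewrite /tau0 mulrN opprK.
  exact: expR_ge1Dx.
have hz : (1 - eps) * (x0 * (2 - x0)) <= 1 - w `^ a.
  have ha0 : 0 < a by apply: lt_trans aK; rewrite subr_gt0.
  have hb := @bernoulli_le1 R w a (ltW (proj1 (andP w01))) (introT andP (conj ha0 ha)).
  rewrite -w1.
  have h4 : (1 - eps) * (1 - w) <= a * (1 - w).
    by rewrite ler_pM2r ?w1 //; exact: ltW.
  apply: le_trans h4 _.
  have e : a * (1 - w) = 1 - (a * w + (1 - a)) by ring.
  by rewrite e lerD2l lerN2.
have hfin : 1 < r * (1 - eps * tau0) * (1 - eps).
  have h1 : 1 - eps * (tau0 + 1) <= (1 - eps * tau0) * (1 - eps).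
    have -> : (1 - eps * tau0) * (1 - eps) = 1 - eps * (tau0 + 1) + eps * eps * tau0 by ring.
    by rewrite lerDl; apply: mulr_ge0; [apply: mulr_ge0|]; apply: ltW.
  have h2 : r * (1 - dl / 2) = (r + 1) / 2.
    by rewrite /dl; field; rewrite gt_eqF // (lt_trans ltr01).
  rewrite e1 in h1.
  have h3 : r * (1 - dl / 2) <= r * ((1 - eps * tau0) * (1 - eps)).
    by rewrite ler_pM2l // (lt_trans ltr01).
  rewrite -mulrA; apply: lt_le_trans h3; rewrite h2 ltr_pdivlMr // mul1r.
  by rewrite -ltrBlDr (_ : 2 - 1 = 1 :> R) //; ring.
apply: (lt_le_trans hfin).
have -> : r * (1 - eps * tau0) * (1 - eps) =
    y^-1 * (x0^-1 * (1 - eps * tau0)) * ((1 - eps) * (x0 * (2 - x0))).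
  by rewrite /r; field; rewrite !gt_eqF.
have eps' : 0 <= 1 - eps by rewrite subr_ge0; exact: ltW.
have et' : 0 <= 1 - eps * tau0.
  rewrite subr_ge0; apply: (le_trans et); rewrite ler_pdivrMr // mul1r.
  apply: (le_trans (ltW dl1)); exact: ler1n.
have xx0' : 0 <= x0 * (2 - x0) by exact: ltW.
have yi : 0 <= y^-1 by rewrite invr_ge0.
have xi : 0 <= x0^-1 * (1 - eps * tau0) by rewrite mulr_ge0 // invr_ge0.
apply: ler_pM => //.
- exact: mulr_ge0.
- by rewrite mulr_ge0.
- by apply: ler_pM.
Qed.
Lemma L2norm {d} {T : measurableType d} {R : realType} (P : probability T R) (f : T -> R) (a : R) :
  ('E_P[f \* f] = a%:E)%E -> Lnorm P 2%:E (EFin \o f) = (Num.sqrt a)%:E.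
Proof.
move=> h; rewrite unlock /=.
have -> : (\int[P]_x (`|(f x)%:E| `^ 2))%E = a%:E.
  rewrite -h unlock; apply: eq_integral => x _.
  by rewrite abse_EFin poweR_EFin (@powR_mulrn _ _ 2) ?normr_ge0// -normrX ger0_norm ?sqr_ge0 // expr2.
rewrite poweR_EFin powR12_sqrt //.
have : (0 <= 'E_P[f \* f])%E.
  rewrite unlock; apply: integral_ge0 => x _; by rewrite lee_fin /= -expr2 sqr_ge0.
by rewrite h lee_fin.
Qed.

Lemma cs {d} {T : measurableType d} {R : realType} (P : probability T R) (f g : T -> R) :
  measurable_fun setT f -> measurable_fun setT g ->
  forall a b c : R, ('E_P[f \* f] = a%:E)%E -> ('E_P[g \* g] = b%:E)%E -> ('E_P[f \* g] = c%:E)%E ->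
  `|c| <= Num.sqrt a * Num.sqrt b.
Proof.
move=> mf mg a b c ha hb hc.
have two : (0:R) < 2 by [].
have h := @hoelder _ _ _ P f g 2 2 mf mg two two.
have /h : (2^-1 + 2^-1 = 1 :> R) by field.

rewrite (L2norm _ _ _ ha) (L2norm _ _ _ hb) Lnorm1 -EFinM => h2.
rewrite -lee_fin; apply: le_trans h2.
rewrite -abse_EFin -hc unlock; apply: le_trans (le_abse_integral _ _ _) _ => //.
  by apply/measurable_EFinP; exact: measurable_funM.

Qed.

Lemma covHK_diag (R : realType) (H K t : R) : 0 < H -> 0 < K ->
  covHK H K t t = `|t| `^ (2 * H * K).
Proof.
move=> hH hK; rewrite /covHK subrr normr0 powR0; last by rewrite !mulf_neq0 ?gt_eqF.
rewrite subr0.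
have -> : `|t| `^ (2 * H) + `|t| `^ (2 * H) = 2 * `|t| `^ (2 * H) by ring.
by rewrite powRM ?powR_ge0// -powRrM mulrA two_powRNK mul1r.
Qed.

Lemma covHK_exp (R : realType) (H K tau : R) : 0 < H -> 0 < K ->
  covHK H K 1 (expR tau) = expR (tau * H * K) * Kfun H K tau.
Proof.
move=> hH hK; rewrite /covHK /Kfun normr1 powR1 /= gtr0_norm ?expR_gt0//.
have h1 : 1 + expR tau `^ (2 * H) = 2 * (cosh (H * tau) * expR (H * tau)).
  rewrite -expRM /cosh.
  have -> : expR (tau * (2 * H)) = expR (H * tau) * expR (H * tau).
    by rewrite -expRD; congr expR; ring.
  have : expR (- (H * tau)) * expR (H * tau) = 1 by rewrite -expRD addNr expR0.
  have := expR_gt0 (H * tau).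
  move: (expR (H * tau)) (expR (- (H * tau))) => u v u0 uv.
  have u1 : u != 0 by rewrite gt_eqF.
  have -> : 2 * ((u + v) / 2 * u) = u * u + v * u by field.
  by rewrite uv addrC.
have h2 : `|expR tau - 1| = 2 * (`|sinh (tau / 2)| * expR (tau / 2)).
  suff -> : expR tau - 1 = 2 * (sinh (tau / 2) * expR (tau / 2)).
    by rewrite !normrM (gtr0_norm (expR_gt0 _)) ger0_norm.
  rewrite /sinh.
  have -> : expR tau = expR (tau/2) * expR (tau/2).
    by rewrite -expRD; congr expR; field.
  have : expR (- (tau/2)) * expR (tau/2) = 1 by rewrite -expRD addNr expR0.
  move: (expR (tau/2)) (expR (- (tau/2))) => u v uv.
  have -> : 2 * ((u - v) / 2 * u) = u * u - v * u by field.
  by rewrite uv.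
rewrite h1 h2 !powRM ?mulr_ge0 ?normr_ge0 ?expR_ge0 //; try by rewrite /cosh divr_ge0 // addr_ge0 ?expR_ge0.

rewrite -!expRM.
have -> : H * tau * K = tau * H * K by ring.
have -> : tau / 2 * (2 * H * K) = tau * H * K by field.
have -> : (2 * H - 1) * K = - K + 2 * H * K by ring.
rewrite two_powRD.
have := two_powRNK _ K.
move: (2 `^ (-K)) (2 `^ K) => u v uv.
rewrite mulrBr [u * (v * _)]mulrA uv mul1r.
ring.
Qed.

Lemma covHK_1m1 (R : realType) (H K : R) :
  covHK H K 1 (-1) = 1 - 2 `^ ((2 * H - 1) * K).
Proof.
rewrite /covHK normrN normr1 powR1 /=.
rewrite (_ : `|-1 - 1| = 2 :> R); last by rewrite -opprD normrN ger0_norm.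
rewrite (_ : 1 + 1 = 2 :> R) // mulrBr two_powRNK -two_powRD.
by congr (_ - 2 `^ _); ring.
Qed.

Theorem proposition3p2 (R : realType) (H K : R) (hH : 0 < H) (hK : 0 < K) :
  ((exists (d : measure_display) (T : measurableType d)
           (P : probability T R) (X : R -> T -> R),
       centered_gaussian_process P setT X (covHK H K)) ->
     (2 * H - 1) * K <= 1)
  /\
  ((exists (d : measure_display) (T : measurableType d)
           (P : probability T R) (X : R -> T -> R),
       centered_gaussian_process P [set t : R | 0 <= t] X (covHK H K)) ->
     (K%:E <= Khat H)%E)
  /\
  (1 < H -> (Khat H < (H^-1)%:E)%E).
Proof.
split; [|split].
- case=> d [T [P [X [hm _ hc _]]]].
  have := cs P _ _ (hm 1 I) (hm (-1) I) _ _ _ (hc 1 1 I I) (hc (-1) (-1) I I) (hc 1 (-1) I I).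
  rewrite !covHK_diag // normrN normr1 powR1 /= sqrtr1 mulr1 covHK_1m1.
  move=> h; rewrite leNgt; apply/negP => hlt.
  have : 2 `^ 1 < 2 `^ ((2 * H - 1) * K) :> R by apply: ltr_powR_exp hlt; rewrite ltr1n.
  rewrite powRr1 // => h2.
  move: h; rewrite ler_norml => /andP[h3 _]; lra.
- case=> d [T [P [X [hm _ hc _]]]].
  have S1 : [set t : R | 0 <= t] 1 by rewrite /= ler01.
  rewrite /Khat; apply: ereal_sup_ubound; exists K => //; split => //.
  apply: ge_ereal_sup => _ [tau t0 <-]; rewrite lee_fin.
  have St : [set t : R | 0 <= t] (expR tau) by rewrite /= expR_ge0.
  have := cs P _ _ (hm 1 S1) (hm _ St) _ _ _ (hc 1 1 S1 S1) (hc _ _ St St) (hc 1 _ S1 St).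
  rewrite !covHK_diag // covHK_exp // normr1 powR1 /= sqrtr1 mul1r.
  have -> : Num.sqrt (`|expR tau| `^ (2 * H * K)) = expR (tau * H * K).
    rewrite gtr0_norm ?expR_gt0 // -expRM.
    rewrite (_ : tau * (2 * H * K) = tau * H * K + tau * H * K); last by ring.
    by rewrite expRD -expr2 sqrtr_sqr gtr0_norm ?expR_gt0.
  move/(le_trans (ler_norm _)).
  by rewrite -{2}(mulr1 (expR (tau * H * K))) ler_pM2l ?expR_gt0.
- move=> H1.
  have [a0 [tau0 [a00 a01 t0 hb]]] := @Kfun_big R H H1.
  apply: (@le_lt_trans _ _ (a0 / H)%:E).
    apply: ge_ereal_sup => _ [K' [K'0 hK'] <-]; rewrite lee_fin.
    rewrite leNgt; apply/negP => hlt.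
    have h1 : 1 < Kfun H K' tau0.
      by apply: hb => //; rewrite mulrC -ltr_pdivrMr.
    have : ((Kfun H K' tau0)%:E <= ereal_sup [set (Kfun H K' tau)%:E | tau in [set tau : R | (0 < tau)%R]])%E.
      by apply: ereal_sup_ubound; exists tau0.
    move/le_trans/(_ hK'); rewrite lee_fin; lra.
  by rewrite lte_fin ltr_pdivrMr // mulVf // gt_eqF.
Qed.
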